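(* Let $P$ be a finite $(3+1)$-free poset, $\lambda$ a partition, and $(r,c)$, $(r+d+1,c+d)$ boxes of the Young diagram of $\lambda$ with $d\ge0$. Then for every $P$-tableau $T$ of shape $\lambda$, $T(r,c)<_PT(r+d+1,c+d)$.
   Context: $a<_Pb$: strict order. Young diagrams in English notation (row index increasing downward, column index increasing rightward). A $P$-tableau of shape $\lambda$ is a filling $T$ of the Young diagram by elements of $P$ with $T(1,c)<_PT(2,c)<_P\cdots$ down each column and $T(r,c+1)\not<_PT(r,c)$ along each row. *)

(* Defs.v *)
From mathcomp Require Import all_boot all_order.
Set Implicit Arguments. Unset Strict Implicit. Unset Printing Implicit Defensive.
Import Order.TTheory.
Local Open Scope order_scope.

Definition three_one_free (disp : Order.disp_t) (P : finPOrderType disp) : Prop :=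
  ~ exists a b c x : P, [/\ a < b, b < c, x >< a, x >< b & x >< c].

Definition is_partition (la : seq nat) : bool :=
  sorted geq la && all (fun k => 0 < k)%N la.

(* Box (r, c) (1-indexed: row r, column c, English notation) of the Young
   diagram of la. *)
Definition in_diagram (la : seq nat) (r c : nat) : bool :=
  [&& (0 < r)%N, (0 < c)%N & (c <= nth 0 la r.-1)%N].

(* A P-tableau of shape la: a filling T (only values on boxes matter) with
   strictly increasing columns and rows with no descent T(r,c+1) <_P T(r,c). *)
Definition P_tableau (disp : Order.disp_t) (P : finPOrderType disp)
    (la : seq nat) (T : nat -> nat -> P) : Prop :=
  (forall r c, in_diagram la r c -> in_diagram la r.+1 c -> T r c < T r.+1 c) /\
  (forall r c, in_diagram la r c -> in_diagram la r c.+1 -> ~~ (T r c.+1 < T r c)).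

(* Main.v *)
Require Import Defs.
From mathcomp Require Import all_boot all_order.
Import Order.TTheory.
Local Open Scope order_scope.

Lemma diag_mono {la : seq nat} {i j i' j' : nat} :
  is_partition la -> in_diagram la i j -> (0 < i')%N -> (i' <= i)%N ->
  (0 < j')%N -> (j' <= j)%N -> in_diagram la i' j'.
Proof.
move=> /andP[Hs _] /and3P[Hi Hj Hjl] Hi' Hii Hj' Hjj.
apply/and3P; split => //.
have Hsz : (i.-1 < size la)%N.
  rewrite ltnNge; apply/negP => Hge.
  by move: Hjl; rewrite nth_default // leqn0 => /eqP E; rewrite E in Hj.
apply: (leq_trans Hjj); apply: (leq_trans Hjl).
have Htr : transitive geq by move=> a b e /= H1 H2; apply: leq_trans H2 H1.
have := @sorted_leq_nth nat geq Htr (fun x => leqnn x) 0 la Hs.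
move=> H; apply: H.
- by rewrite inE (leq_ltn_trans _ Hsz) // -!subn1 leq_sub2r.
- by rewrite inE.
- by rewrite -!subn1 leq_sub2r.
Qed.

Theorem mainTheorem20 (disp : Order.disp_t) (P : finPOrderType disp)
    (la : seq nat) (r c d : nat) (T : nat -> nat -> P) :
  three_one_free P -> is_partition la ->
  in_diagram la r c -> in_diagram la (r + d + 1)%N (c + d)%N ->
  P_tableau la T ->
  T r c < T (r + d + 1)%N (c + d)%N.
Proof.
move=> Hfree Hpart Hrc Hd [Hcol Hrow].
elim: d c Hrc Hd => [|d IH] c Hrc Hd.
  rewrite !addn0 addn1 in Hd *; exact: Hcol.
set i := (r + d + 1)%N.
set j := (c + d)%N.
have Ei : (r + d.+1 + 1)%N = i.+1 by rewrite /i !addn1 addnS.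
have Ej : (c + d.+1)%N = j.+1 by rewrite /j addnS.
rewrite Ei Ej in Hd *.
have Hr : (0 < r)%N by case/and3P: Hrc.
have Hc : (0 < c)%N by case/and3P: Hrc.
have Hri : (r <= i)%N by rewrite /i -addnA leq_addr.
have Hcj : (c <= j)%N by rewrite /j leq_addr.
have Hi0 : (0 < i)%N by rewrite /i addn1.
have Hj0 : (0 < j)%N by apply: leq_trans Hc Hcj.
have Dij : in_diagram la i j.
  exact: (diag_mono Hpart Hd Hi0 (leqnSn i) Hj0 (leqnSn j)).
have Dij1 : in_diagram la i j.+1.
  exact: (diag_mono Hpart Hd Hi0 (leqnSn i) (ltn0Sn j) (leqnn _)).
have Di1j : in_diagram la i.+1 j.
  exact: (diag_mono Hpart Hd (ltn0Sn i) (leqnn _) Hj0 (leqnSn j)).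
have Drc1 : in_diagram la r c.+1.
  exact: (diag_mono Hpart Hd Hr (leq_trans Hri (leqnSn i)) (ltn0Sn c) Hcj).
have Hxw : T r c < T i j by apply: IH.
have Hab : T r c.+1 < T i j.+1.
  have := IH c.+1 Drc1; rewrite addSn -/j; apply; exact: Dij1.
have Hww : T i j < T i.+1 j by apply: Hcol.
have Hbz : T i j.+1 < T i.+1 j.+1 by apply: Hcol.
have Nbw : ~~ (T i j.+1 < T i j) by apply: Hrow.
have Nzw : ~~ (T i.+1 j.+1 < T i.+1 j) by apply: Hrow.
have Nax : ~~ (T r c.+1 < T r c) by apply: Hrow.
set x := T r c in Hxw Nax *.
set a := T r c.+1 in Hab Nax *.
set b := T i j.+1 in Hab Hbz Nbw *.
set z := T i.+1 j.+1 in Hbz Nzw *.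
set w := T i j in Hxw Hww Nbw.
set w' := T i.+1 j in Hww Nzw.
have Haz : a < z by apply: lt_trans Hab Hbz.
case: (boolP (x >=< a)) => [|Ca].
  case/orP => [Hxa|]; first exact: le_lt_trans Hxa Haz.
  rewrite le_eqVlt => /orP[/eqP <- //|Hax]; by rewrite Hax in Nax.
case: (boolP (x >=< b)) => [|Cb].
  case/orP => [Hxb|Hbx]; first exact: le_lt_trans Hxb Hbz.
  by rewrite (le_lt_trans Hbx Hxw) in Nbw.
case: (boolP (x >=< z)) => [|Cz].
  case/orP => [|Hzx].
    rewrite le_eqVlt => /orP[/eqP Exz|//].
    by rewrite -Exz (lt_trans Hxw Hww) in Nzw.
  by rewrite (le_lt_trans Hzx (lt_trans Hxw Hww)) in Nzw.
exfalso; apply: Hfree; exists a, b, z, x; split => //.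
Qed.
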